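(* Let $G=(V,E,w)$ be an $\mathbb{N}^k$-labeled complete directed graph, let $Q\subseteq E$ be a set of pairwise vertex-disjoint paths, and let $G'=(V',E',w')=\mathrm{contract}_Q(G)$. Then for every Hamiltonian cycle $T'\subseteq E'$ of $G'$, the edge set $T=\mathrm{expand}_Q(T')$ is a Hamiltonian cycle of $G$ with $w(T)=w'(T')+w(Q)$.
   Context: An $\mathbb{N}^k$-labeled complete directed graph is $G=(V,E,w)$ with $V$ finite, $E=\{(u,v)\in V\times V: u\neq v\}$, $w\colon E\to\mathbb{N}^k$; $w$ is extended to edge sets by summation. Paths and cycles are identified with their edge sets; a Hamiltonian cycle visits every vertex exactly once. For an edge $(u,v)\in E$: $\mathrm{contract}_{(u,v)}(G)=(V\setminus\{v\},\{e\in E: v \text{ not incident to } e\},w')$ where $w'(x,y)=w(x,y)$ for $x\ne u$ and $w'(u,z)=w(v,z)$. For a path $P=u_0,e_1,u_1,\dots,e_r,u_r$: $\mathrm{contract}_P(G)=\mathrm{contract}_{e_1}(\mathrm{contract}_{e_2}(\cdots\mathrm{contract}_{e_r}(G)\cdots))$. For a set $Q$ of pairwise vertex-disjoint paths $P_1,\dots,P_r$: $\mathrm{contract}_Q(G)=\mathrm{contract}_{P_1}(\cdots\mathrm{contract}_{P_r}(G)\cdots)$. For an edge set $T$ (Hamiltonian cycle of a contracted graph): $\mathrm{expand}_{(u,v)}(T)=\{(x,y)\in T: x\ne u\}\cup\{(u,v)\}\cup\{(v,x):(u,x)\in T\}$; $\mathrm{expand}_P(T)=\mathrm{expand}_{e_r}(\mathrm{expand}_{e_{r-1}}(\cdots\mathrm{expand}_{e_1}(T)\cdots))$;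 $\mathrm{expand}_Q(T)=\mathrm{expand}_{P_r}(\cdots\mathrm{expand}_{P_1}(T)\cdots)$. Here $w(Q)$ is the total weight of all edges of all paths in $Q$. *)

(* Defs.v *)
From mathcomp Require Import all_boot.
Set Implicit Arguments. Unset Strict Implicit. Unset Printing Implicit Defensive.

(* An N^k-labeled complete directed graph: the vertex set V is a finite set of
   elements of a finType T; the edge set is E = {(u,v) in V x V | u <> v};
   the label of (u,v) is the vector (wt G u v i)_{i < k} (only its values on
   edges matter). *)
Record graph (T : finType) (k : nat) := Graph {
  vert : {set T};
  wt : T -> T -> 'I_k -> nat }.

Section Defs.
Variables (T : finType) (k : nat).
Implicit Types (G : graph T k) (C : {set T * T}) (P : seq T) (Q : seq (seq T)).

Definition edges G : {set T * T} :=
  [set e : T * T | [&& e.1 \in vert G, e.2 \in vert G & e.1 != e.2]].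

Definition wset G C (i : 'I_k) : nat := \sum_(e in C) wt G e.1 e.2 i.

Definition hamiltonian_cycle G C : Prop :=
  C \subset edges G /\
  exists s : seq T,
    [/\ uniq s, 2 <= size s, (forall x, (x \in s) = (x \in vert G)) &
        C = [set e : T * T | (e.1 \in s) && (e.2 == next s e.1)]].

Definition contract_edge G (u v : T) : graph T k :=
  Graph (vert G :\ v) (fun x y => if x == u then wt G v y else wt G x y).

(* a path P = u_0, ..., u_r is given by its vertex sequence;
   contract_P(G) = contract_{e_1}(contract_{e_2}(... contract_{e_r}(G))) *)
Fixpoint contract_path G P : graph T k :=
  match P with
  | u :: s => match s with
              | [::] => G
              | v :: _ => contract_edge (contract_path G s) u v
              end
  | [::] => G
  end.

Definition contract_paths G Q : graph T k :=
  foldr (fun P H => contract_path H P) G Q.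

Definition expand_edge (u v : T) C : {set T * T} :=
  [set e in C | e.1 != u] :|: [set (u, v)] :|: [set (v, e.2) | e in C & e.1 == u].

Fixpoint expand_path P C : {set T * T} :=
  match P with
  | u :: s => match s with
              | [::] => C
              | v :: _ => expand_path s (expand_edge u v C)
              end
  | [::] => C
  end.

Definition expand_paths Q C : {set T * T} :=
  foldl (fun C P => expand_path P C) C Q.

Definition path_edges P : seq (T * T) := zip P (behead P).

(* P is a (simple) path of G: nonempty, no repeated vertex, all vertices in V
   (consecutive vertices are then distinct, so all its edges lie in E). *)
Definition is_path G P : Prop :=
  [/\ P != [::], uniq P & {subset P <= vert G}].

Definition wpaths G Q (i : 'I_k) : nat :=
  \sum_(P <- Q) \sum_(e <- path_edges P) wt G e.1 e.2 i.

End Defs.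

(* Main.v *)
Require Import Defs.
From mathcomp Require Import all_boot.

Set Implicit Arguments.
Section Helpers.
Variables (T : finType) (k : nat).

Lemma mem_zip1 (s t : seq T) (e : T * T) : e \in zip s t -> e.1 \in s.
Proof.
elim: s t => [|x s IH] [|y t] //= ; rewrite inE => /orP[/eqP -> | /IH]; rewrite inE ?eqxx //.
by move=> ->; rewrite orbT.
Qed.

Lemma mem_imexp (u v : T) (C : {set T * T}) a b :
  ((a, b) \in [set (v, e.2) | e in C & e.1 == u]) = (a == v) && ((u, b) \in C).
Proof.
apply/imsetP/andP.
  by case=> [[x y]]; rewrite inE /= => /andP[xC /eqP xu] [-> ->]; subst x.
by case=> /eqP -> uC; exists (u, b); rewrite // inE uC eqxx.
Qed.

Lemma sum_cycle (F : T * T -> nat) (s : seq T) : uniq s ->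
  \sum_(e in [set e : T * T | (e.1 \in s) && (e.2 == next s e.1)]) F e
  = \sum_(x <- s) F (x, next s x).
Proof.
move=> us.
have -> : [set e : T * T | (e.1 \in s) && (e.2 == next s e.1)] =
          [set (x, next s x) | x in s].
  apply/setP => [[a b]]; rewrite inE /=.
  apply/andP/imsetP.
    by case=> as_ /eqP ->; exists a.
  by case=> x xs [-> ->].
rewrite big_imset /=; last by move=> x y _ _ [].
by rewrite big_uniq.
Qed.

Lemma ham_rot (G : graph T k) C u : hamiltonian_cycle G C -> u \in vert G ->
  C \subset edges G /\ exists t : seq T,
    [/\ uniq (u :: t), 2 <= size (u :: t), (forall x, (x \in u :: t) = (x \in vert G)) &
        C = [set e : T * T | (e.1 \in u :: t) && (e.2 == next (u :: t) e.1)]].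
Proof.
move=> [sub [s [us ss ms eC]]] uG; split=> //; rewrite eC.
have us' : u \in s by rewrite ms.
exists (drop (index u s).+1 s ++ take (index u s) s)%SEQ.
rewrite -rot_index // rot_uniq size_rot; split=> //.
  by move=> x; rewrite mem_rot.
by apply/setP => e; rewrite !inE mem_rot next_rot.
Qed.

Lemma contract_edge_ham (H : graph T k) u v C : u != v -> u \in vert H -> v \in vert H ->
  hamiltonian_cycle (contract_edge H u v) C ->
  hamiltonian_cycle H (expand_edge u v C) /\
  forall i, wset H (expand_edge u v C) i = wset (contract_edge H u v) C i + wt H u v i.
Proof.
move=> nuv uH vH hC.
have uH' : u \in vert (contract_edge H u v) by rewrite /= in_setD1 uH andbT; move: nuv; rewrite eq_sym.
have [sub [t [ut st mt eC]]] := ham_rot hC uH'.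
case: t => [|y t] in ut st mt eC *; first by [].
have vnot : v \notin u :: y :: t by rewrite mt /= in_setD1 eqxx.
pose s2 := u :: v :: y :: t.
have nextE : forall a, a != u -> a != v -> next s2 a = next (u :: y :: t) a.
  by move=> a au av; rewrite /s2 /next /= (negbTE au) (negbTE av).
have memE : forall a b, ((a, b) \in expand_edge u v C) = (a \in s2) && (b == next s2 a).
  move=> a b; rewrite /expand_edge !inE mem_imexp eC !inE /=.
  have := vnot; rewrite !inE !negb_or => /and3P[vu vy vt].
  rewrite xpair_eqE !eqxx /=.
  have [->|au] := eqVneq a u.
    by rewrite andbF (negbTE nuv) /= orbF.
  have [->|av] := eqVneq a v.
    by rewrite (negbTE vy) (negbTE vt).
  by rewrite /= andbT !orbF.
have := vnot; rewrite !inE !negb_or => /and3P[vu vy vt].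
have eE : expand_edge u v C = [set e : T * T | (e.1 \in s2) && (e.2 == next s2 e.1)].
  by apply/setP => [[a b]]; rewrite memE [RHS]inE.
have us2 : uniq s2.
  move: ut; rewrite /s2 /= !inE !negb_or => /andP[/andP[uy ut'] /andP[yt tu]].
  by rewrite (eq_sym u v) vu uy ut' vy vt yt tu.
split.
  split.
    apply/subsetP => [[a b]]; rewrite /expand_edge !inE mem_imexp.
    case/orP => [/orP[/andP[abC _]|/eqP[-> ->]]|/andP[/eqP -> ubC]].
    - move: (subsetP sub _ abC); rewrite !inE /=.
      by case/and3P => /andP[_ ->] /andP[_ ->].
    - by rewrite uH vH nuv.
    - move: (subsetP sub _ ubC); rewrite !inE /=.
      by case/and3P => _ /andP[bv ->] _; rewrite vH eq_sym.
  exists s2; split=> //.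
  - move=> x; have := mt x; rewrite /s2 /= in_setD1 !inE.
    have [->|xv] := eqVneq x v; first by rewrite orbT vH.
    by rewrite /= => ->.
move=> i; rewrite /wset eE eC !sum_cycle //=.
have n1 : next s2 u = v by rewrite /s2 /next /= eqxx.
have n2 : next s2 v = y by rewrite /s2 /next /= (negbTE vu) eqxx.
have n3 : next (u :: y :: t) u = y by rewrite /next /= eqxx.
have -> : s2 = [:: u, v & y :: t] by [].
rewrite [in LHS]big_cons [in LHS]big_cons [in RHS]big_cons !eqxx (negbTE vu).
rewrite [RHS]addnC; congr (_ + (_ + _)).
apply: eq_big_seq => x xt.
have xu : x != u by apply: contraTneq xt => ->; case/andP: ut.
have xv : x != v by apply: contraTneq xt => ->; move: vnot; rewrite inE negb_or => /andP[].
by rewrite (negbTE xu) (negbTE xv).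
Qed.

Lemma wt_cp (G : graph T k) P x : x \notin P -> wt (contract_path G P) x = wt G x.
Proof.
elim: P => [|u P IH] //=; case: P IH => [|v s] IH //=.
rewrite inE negb_or => /andP[xu xP].
by rewrite (negbTE xu) IH.
Qed.

Lemma vert_cp (G : graph T k) P x :
  (x \in vert (contract_path G P)) = (x \in vert G) && (x \notin behead P).
Proof.
elim: P => [|u P IH] //=; first by rewrite andbT.
case: P IH => [|v s] IH /=; first by rewrite andbT.
by rewrite in_setD1 IH /= inE negb_or; case: (x == v); rewrite ?andbF.
Qed.

Lemma path_ham (G : graph T k) P C : uniq P -> {subset P <= vert G} ->
  hamiltonian_cycle (contract_path G P) C ->
  hamiltonian_cycle G (expand_path P C) /\
  forall i, wset G (expand_path P C) i =
    wset (contract_path G P) C i + \sum_(e <- path_edges P) wt G e.1 e.2 i.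
Proof.
elim: P C => [|u P IH] C //=.
  by move=> _ _ hC; split=> // i; rewrite /path_edges big_nil addn0.
case: P IH => [|v s] IH /=.
  by move=> _ _ hC; split=> // i; rewrite /path_edges /= big_nil addn0.
move=> /andP[]; rewrite inE negb_or => /andP[uv us] uvs sub hC.
have uH : u \in vert (contract_path G (v :: s)).
  by rewrite vert_cp sub ?inE ?eqxx.
have vH : v \in vert (contract_path G (v :: s)).
  by rewrite vert_cp sub ?inE ?eqxx ?orbT //=; case/andP: uvs.
have [hE wE] := contract_edge_ham uv uH vH hC.
have [hF wF] := IH _ uvs (fun x xs => sub x (@mem_behead _ (u :: v :: s) x xs)) hE.
have wu : wt (contract_path G (v :: s)) u = wt G u by apply: wt_cp; rewrite inE negb_or uv.
split=> // i; rewrite wF wE wu /path_edges /= big_cons /=.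
by rewrite -!addnA.
Qed.

Lemma vert_cps (G : graph T k) (Q : seq (seq T)) x : x \in vert G -> (forall P, P \in Q -> x \notin P) ->
  x \in vert (contract_paths G Q).
Proof.
elim: Q => [|P Q IH] //= xG hQ.
rewrite vert_cp IH //; last by move=> P' P'Q; apply: hQ; rewrite inE P'Q orbT.
have := hQ P; rewrite inE eqxx => /(_ isT).
by apply: contra; case: (P) => //= a s xs; rewrite inE xs orbT.
Qed.

Lemma wt_cps (G : graph T k) (Q : seq (seq T)) x : (forall P, P \in Q -> x \notin P) ->
  wt (contract_paths G Q) x = wt G x.
Proof.
elim: Q => [|P Q IH] //= hQ.
rewrite wt_cp ?IH //; first by move=> P' P'Q; apply: hQ; rewrite inE P'Q orbT.
by apply: hQ; rewrite inE eqxx.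
Qed.
End Helpers.

Theorem proposition12 (T : finType) (k : nat) (G : graph T k) (Q : seq (seq T)) :
  (forall P, P \in Q -> is_path G P) ->
  pairwise (fun P1 P2 : seq T => [disjoint P1 & P2]) Q ->
  forall T' : {set T * T},
    hamiltonian_cycle (contract_paths G Q) T' ->
    hamiltonian_cycle G (expand_paths Q T') /\
    forall i : 'I_k,
      wset G (expand_paths Q T') i = wset (contract_paths G Q) T' i + wpaths G Q i.
Proof.
elim: Q => [|P Q IH] hpath hpair C hC.
  by split=> // i; rewrite /wpaths big_nil addn0.
move: hpair; rewrite pairwise_cons => /andP[hall hpair].
have [_ uP subP] := hpath P (mem_head _ _).
have notin : forall x, x \in P -> forall P', P' \in Q -> x \notin P'.
  by move=> x xP P' P'Q; rewrite (disjointFr (allP hall P' P'Q) xP).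
have subP' : {subset P <= vert (contract_paths G Q)}.
  by move=> x xP; apply: vert_cps; [apply: subP | apply: notin].
have [hE wE] := path_ham (contract_paths G Q) uP subP' hC.
have hQ : forall P', P' \in Q -> is_path G P'.
  by move=> P' P'Q; apply: hpath; rewrite inE P'Q orbT.
have [hF wF] := IH hQ hpair _ hE.
split=> // i; rewrite /expand_paths /= -/(expand_paths Q _) wF wE.
rewrite /wpaths big_cons -/(wpaths G Q i) addnA; congr (_ + _ + _).
apply: eq_big_seq => e /mem_zip1 eP.
by rewrite wt_cps //; apply: notin.
Qed.
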